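(* Let $s,t,q,N$ be integers with $0\le s<q$, $1\le t<q$, $N\ge0$, $t\nmid q$ and $\gcd(t,q)=1$. Write $q=\overline qt+\widehat q$ ($1\le\widehat q<t$), $s=\overline st+\widehat s$ ($0\le\widehat s<t$). Let $S^-(s,t,q,N)=\sum_{k=0}^N\lfloor(s-kt)/q\rfloor$, $M=-\lfloor(s-Nt)/q\rfloor$, $x_M=(s+(M-1)q)/t$ and $S=-\overline q\frac{(M-1)M}2-M(N-\lfloor x_M\rfloor)$. Let $H=\{k\in\mathbb N:(\widehat s+k\widehat q)\bmod t<\widehat q\}$, $J=H\cap\{0,\dots,t-1\}=\{j_0<\dots<j_{\widehat q-1}\}$, and $S_K=\sum_{k\in K}k$. Then: (a) if $j_0\ge M$, $S^-(s,t,q,N)=S$; (b.1) if $j_0<M\le j_{\widehat q-1}$, $S^-(s,t,q,N)=S-S_K$ with $K=H\cap\{0,\dots,M-1\}$; (b.2) if $j_{\widehat q-1}<M$ and $j_0+t\ge M$, $S^-(s,t,q,N)=S-S_J$; (b.3) if $j_{\widehat q-1}<M$ and $j_0+t<M$, with $u=\lfloor(M-1)/t\rfloor$ and $K=H\cap\{ut,\dots,M-1\}$, $S^-(s,t,q,N)=S-uS_J-\widehat q\,t\frac{(u-1)u}2-S_K$.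
   Context: Here $r\bmod t$ denotes the representative of $r$ in $\{0,\dots,t-1\}$. *)

(* Defs.v *)
From HB Require Import structures.
From mathcomp Require Import all_boot all_order all_algebra.
Set Implicit Arguments. Unset Strict Implicit. Unset Printing Implicit Defensive.
Import Order.TTheory GRing.Theory Num.Theory.
Local Open Scope ring_scope.

(* For d > 0, (m %/ d)%Z is the floor of m/d and (m %% d)%Z is in [0, d). *)

Definition Sminus (s t q N : int) : int :=
  \sum_(0 <= k < (absz N).+1) ((s - (k%:Z) * t) %/ q)%Z.

Definition Mval (s t q N : int) : int := - ((s - N * t) %/ q)%Z.

Definition qbar (t q : int) : int := (q %/ t)%Z.
Definition qhat (t q : int) : int := (q %% t)%Z.
Definition shat (s t : int) : int := (s %% t)%Z.

Definition floor_xM (s t q M : int) : int := ((s + (M - 1) * q) %/ t)%Z.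

(* S = - qbar (M-1)M/2 - M (N - floor x_M)   ((M-1)M is even) *)
Definition Sval (s t q N : int) : int :=
  let M := Mval s t q N in
  - qbar t q * (((M - 1) * M) %/ 2)%Z - M * (N - floor_xM s t q M).

Definition inH (s t q : int) (k : nat) : bool :=
  ((shat s t + k%:Z * qhat t q) %% t)%Z < qhat t q.

Definition Jseq (s t q : int) : seq nat :=
  [seq j <- iota 0 (absz t) | inH s t q j].

Definition jj (s t q : int) (i : nat) : nat := nth 0%N (Jseq s t q) i.

Definition SJ (s t q : int) : int := \sum_(j <- Jseq s t q) (j%:Z).

Definition SK (s t q : int) (a b : nat) : int :=
  \sum_(a <= k < b | inH s t q k) (k%:Z).

(* Main.v *)
Require Import Defs.
From HB Require Import structures.
From mathcomp Require Import all_boot all_order all_algebra.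
From mathcomp Require Import zify ring.
Import Order.TTheory GRing.Theory Num.Theory.
Local Open Scope ring_scope.

Lemma floor_char (a z t : int) : 0 < t -> z * t <= a -> a < z * t + t -> (a %/ t)%Z = z.
Proof.
move=> t0 h1 h2.
have e := divz_eq a t.
have m0 : 0 <= (a %% t)%Z by apply: modz_ge0; rewrite gt_eqF.
have m1 : (a %% t)%Z < t by apply: ltz_pmod.
set d := (a %/ t)%Z in e *; set r := (a %% t)%Z in e m0 m1 *.
have : d <= z by nia.
have : z <= d by nia.
lia.
Qed.

Lemma floor_bounds (a t : int) : 0 < t -> (a %/ t)%Z * t <= a /\ a < (a %/ t)%Z * t + t.
Proof.
move=> t0.
have e := divz_eq a t.
have m0 : 0 <= (a %% t)%Z by apply: modz_ge0; rewrite gt_eqF.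
have m1 : (a %% t)%Z < t by apply: ltz_pmod.
lia.
Qed.

Definition Fz (s t q i : int) : int := ((s + i * q) %/ t)%Z.

Lemma Mstep (s t q : int) (n : nat) : 0 < t -> t < q ->
  let M := Mval s t q n in let M' := Mval s t q n.+1 in
  M' = M \/ (M' = M + 1 /\ Fz s t q M = n).
Proof.
move=> t0 tq /=; rewrite /Mval /Fz.
have q0 : 0 < q by lia.
have [a1 a2] := floor_bounds (s - n%:Z * t) q q0.
have [b1 b2] := floor_bounds (s - n.+1%:Z * t) q q0.
set z := ((s - n%:Z * t) %/ q)%Z in a1 a2 *.
set z' := ((s - n.+1%:Z * t) %/ q)%Z in b1 b2 *.
have hn : n.+1%:Z = n%:Z + 1 by lia.
rewrite hn in b1 b2.
have h1 : z' <= z by nia.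
have h2 : z - 1 <= z' by nia.
have [->|ne] := eqVneq z' z; first by left.
right; have ez : z' = z - 1 by lia.
split; first lia.
apply: floor_char => //; rewrite ez in b2; nia.
Qed.
Lemma Mval_ge0 (s t q : int) (n : nat) : 0 <= s -> s < q -> 0 <= t -> 0 <= Mval s t q n.
Proof.
move=> s0 sq t0; rewrite /Mval oppr_ge0.
have q0 : 0 < q by lia.
have [a1 a2] := floor_bounds (s - n%:Z * t) q q0.
set z := ((s - n%:Z * t) %/ q)%Z in a1 a2 *.
nia.
Qed.

Lemma aux1 (X Y : int) (n : nat) : X - Y * n - (Y + 1) = X + n - (Y + 1) * n.+1.
Proof. nia. Qed.

Lemma Sminus_eq (s t q : int) (n : nat) : 0 <= s -> s < q -> 0 < t -> t < q ->
  Sminus s t q n = \sum_(0 <= i < absz (Mval s t q n)) Fz s t q i%:Z - Mval s t q n * n%:Z.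
Proof.
move=> s0 sq t0 tq; have q0 : 0 < q by lia.
elim: n => [|n IH].
  rewrite /Sminus /= big_nat1 /Mval.
  have -> : ((s - 0%:Z * t) %/ q)%Z = 0 by apply: floor_char; lia.
  by rewrite big_geq // mulr0 subr0.
have -> : Sminus s t q n.+1 = Sminus s t q n - Mval s t q n.+1.
  by rewrite /Sminus /= big_nat_recr //= /Mval opprK.
rewrite IH.
have g0 := @Mval_ge0 s t q n s0 sq (ltW t0).
case: (@Mstep s t q n t0 tq) => [->|[-> hF]].
  by rewrite -[n.+1]addn1 PoszD mulrDr mulr1 opprD addrA.
have -> : absz (Mval s t q n + 1) = (absz (Mval s t q n)).+1 by lia.
rewrite big_nat_recr //=.
have -> : (absz (Mval s t q n))%:Z = Mval s t q n by lia.
rewrite hF; move: (\sum_(0 <= i < absz (Mval s t q n)) Fz s t q i%:Z) (Mval s t q n) => X Y; exact: aux1.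
Qed.
Lemma mod_char (a c r t : int) : 0 < t -> 0 <= r -> r < t -> a = c * t + r -> (a %% t)%Z = r.
Proof.
move=> t0 r0 rt e.
have hd : (a %/ t)%Z = c by apply: floor_char; lia.
have e2 := divz_eq a t; rewrite hd in e2; lia.
Qed.

Lemma aux2 (s q t sb sh qb qh F r k : int) : s = sb*t + sh -> q = qb*t+qh -> s + k*q = F*t + r ->
  sh + (k+1)*qh = (F + qb - sb - (k+1)*qb) * t + (r + qh).
Proof. move=> e1 e2 e3; nia. Qed.

Lemma aux3 (s q t sb sh qb qh F r k : int) : s = sb*t + sh -> q = qb*t+qh -> s + k*q = F*t + r ->
  s + (k+1)*q = (F + qb) * t + (r + qh).
Proof. move=> e1 e2 e3; nia. Qed.

Lemma Fz_step (s t q : int) (k : nat) : 0 < t ->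
  Fz s t q k.+1 = Fz s t q k + qbar t q + (if inH s t q k.+1 then 1 else 0).
Proof.
move=> t0; rewrite /Fz /inH /qbar /qhat /shat.
have tn0 : t != 0 by rewrite gt_eqF.
have es := divz_eq s t; have eq := divz_eq q t; have eA := divz_eq (s + k%:Z * q) t.
have r0 := modz_ge0 (s + k%:Z * q) tn0; have r1 := ltz_pmod (s + k%:Z * q) t0.
have h0 := modz_ge0 q tn0; have h1 := ltz_pmod q t0.
move: es eq eA r0 r1 h0 h1.
set sb := (s %/ t)%Z; set sh := (s %% t)%Z; set qb := (q %/ t)%Z; set qh := (q %% t)%Z.
set F := ((s + k%:Z * q) %/ t)%Z; set r := ((s + k%:Z * q) %% t)%Z.
move=> es eq eA r0 r1 h0 h1.
have hk : k.+1%:Z = k%:Z + 1 by lia.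
rewrite hk.
have E1 := @aux2 s q t sb sh qb qh F r k%:Z es eq eA; have E2 := @aux3 s q t sb sh qb qh F r k%:Z es eq eA.
have [lt|ge] := ltP (r + qh) t.
- rewrite (@mod_char _ _ (r + qh) t t0 _ lt E1); last lia.
  have -> : (r + qh < qh) = false by apply/negbTE; rewrite -leNgt; lia.
  rewrite addr0; apply: floor_char => //; rewrite E2; lia.
- have E1' : sh + (k%:Z + 1) * qh = (F + qb - sb - (k%:Z + 1) * qb + 1) * t + (r + qh - t) by rewrite E1; ring.
  rewrite (@mod_char _ _ (r + qh - t) t t0 _ _ E1'); [|lia|lia].
  have -> : (r + qh - t < qh) by lia.
  apply: floor_char => //; rewrite E2; lia.
Qed.
Definition Tn (m : nat) : int := \sum_(0 <= i < m) i%:Z.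

Lemma SK_rec (s t q : int) (a m : nat) : (a <= m)%N ->
  SK s t q a m.+1 = SK s t q a m + (if inH s t q m then m%:Z else 0).
Proof. by move=> am; rewrite /SK big_mkcond big_nat_recr //= -big_mkcond. Qed.

Lemma sumF (s t q : int) (m : nat) : 0 < t ->
  \sum_(0 <= i < m) Fz s t q i%:Z = m%:Z * Fz s t q (m%:Z - 1) - qbar t q * Tn m - SK s t q 0 m.
Proof.
move=> t0; elim: m => [|m IH].
  by rewrite big_geq // /Tn /SK !big_geq // mul0r mulr0 !subr0.
rewrite big_nat_recr //= IH SK_rec // /Tn big_nat_recr //= -/(Tn m).
case: m IH => [|k] IH.
  move: (Fz s t q 0) (qbar t q) => A B; case: (inH _ _ _ _); lia.
have -> : (k.+2%:Z - 1) = k.+1%:Z by lia.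
have -> : (k.+1%:Z - 1) = k%:Z by lia.
rewrite Fz_step //.
move: (Fz s t q k) (qbar t q) (Tn k.+1) (SK s t q 0 k.+1) => A B C D.
case: (inH _ _ _ _); nia.
Qed.
Lemma Tn2 (m : nat) : Tn m * 2 = (m%:Z - 1) * m%:Z.
Proof.
elim: m => [|m IH]; first by rewrite /Tn big_geq.
rewrite /Tn big_nat_recr //= -/(Tn m).
move: (Tn m) IH => X IH; nia.
Qed.

Lemma Tn_div (M : int) : 0 <= M -> (((M - 1) * M) %/ 2)%Z = Tn (absz M).
Proof.
move=> M0; have -> : M = (absz M)%:Z by lia.
by rewrite -Tn2 mulzK.
Qed.

Lemma key (s t q : int) (n : nat) : 0 <= s -> s < q -> 0 < t -> t < q ->
  Sminus s t q n = Sval s t q n - SK s t q 0 (absz (Mval s t q n)).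
Proof.
move=> s0 sq t0 tq.
rewrite Sminus_eq // sumF // /Sval /floor_xM.
have g0 := @Mval_ge0 s t q n s0 sq (ltW t0).
rewrite Tn_div //.
have -> : (absz (Mval s t q n))%:Z = Mval s t q n by lia.
rewrite /Fz.
move: (Mval s t q n) ((s + (Mval s t q n - 1) * q) %/ t)%Z => A B.
ring.
Qed.
Lemma count_lin (n a b : nat) : (0 < n)%N -> coprime n b -> (b <= n)%N ->
  (\sum_(0 <= k < n | ((a + k * b) %% n < b)%N) 1 = b)%N.
Proof.
move=> n0 cop bn.
rewrite big_mkcond /= big_mkord.
pose h (i : 'I_n) : 'I_n := Ordinal (ltn_pmod (a + i * b) n0).
have hinj : injective h.
  have key : forall i j : 'I_n, (i <= j)%N -> h i = h j -> i = j.
    move=> i j ij /(congr1 val) /= e.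
    apply/val_inj/eqP => /=; rewrite eqn_leq ij /=.
    have : ((a + j * b) == (a + i * b) %[mod n]) by rewrite e.
    rewrite eqn_modDl eqn_mod_dvd ?leq_mul2r ?ij ?orbT // -mulnBl Gauss_dvdl //.
    case: (posnP (j - i)) => [/eqP|pos] d.
      by rewrite subn_eq0 in d.
    have := dvdn_leq pos d; have := ltn_ord j; lia.
  move=> i j e; case: (leqP i j) => ij; first exact: key.
  by apply/esym/key => //; apply: ltnW.
transitivity (\sum_(i < n) (if (h i < b)%N then 1 else 0))%N; first by [].
rewrite -(reindex_inj hinj (P := xpredT) (F := fun i : 'I_n => if (i < b)%N then 1 else 0)%N) /=.
rewrite -(big_mkord xpredT (fun i => if (i < b)%N then 1 else 0)%N).
rewrite (@big_cat_nat _ _ _ b 0 n _ _ (leq0n b) bn) /=.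
rewrite (eq_big_nat _ _ (F2 := fun=> 1%N)); last by move=> i /andP [_ ->].
rewrite [X in (_ + X)%N](eq_big_nat _ _ (F2 := fun=> 0%N)); last first.
  by move=> i /andP [bi _]; rewrite ltnNge bi.
by rewrite !sum_nat_const_nat muln0 muln1 addn0 subn0.
Qed.
Lemma inH_nat (s t q k : nat) :
  inH s t q k = ((s %% t + k * (q %% t)) %% t < q %% t)%N.
Proof. by rewrite /inH /shat /qhat !modz_nat ltz_nat. Qed.

Lemma count_int (s t q : nat) : (0 < t)%N -> gcdz t q = 1 ->
  \sum_(0 <= k < t | inH s t q k) (1:int) = qhat t q.
Proof.
move=> t0 g.
rewrite /qhat modz_nat.
rewrite (eq_bigl _ _ (fun k => inH_nat s t q k)).
have g' : gcdn t q = 1%N by move: g; rewrite /gcdz /=; lia.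
have cop : coprime t (q %% t) by rewrite /coprime gcdn_modr g'.
have bn : (q %% t <= t)%N by apply: ltnW; apply: ltn_pmod.
have -> : \sum_(0 <= i < t | ((s %% t + i * (q %% t)) %% t < q %% t)%N) (1:int)
  = (\sum_(0 <= i < t | ((s %% t + i * (q %% t)) %% t < q %% t)%N) 1%N)%:R
  by rewrite natr_sum.
by rewrite (@count_lin t (s %% t) (q %% t) t0 cop bn) natz.
Qed.

Lemma inH_per (s t q : nat) (k c : nat) : inH s t q (k + c * t) = inH s t q k.
Proof.
rewrite /inH !PoszD PoszM.
have -> : ((shat s t + (k%:Z + c%:Z * t%:Z) * qhat t q) %% t)%Z
         = ((shat s t + k%:Z * qhat t q) %% t)%Z.
  have -> : (shat s t + (k%:Z + c%:Z * t%:Z) * qhat t q)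
           = (c%:Z * qhat t q) * t%:Z + (shat s t + k%:Z * qhat t q) by ring.
  by rewrite modzMDl.
by [].
Qed.
Lemma SJ_SK (s t q : nat) : SJ s t q = SK s t q 0 t.
Proof. by rewrite /SJ /SK big_filter /index_iota subn0. Qed.

Lemma size_J (s t q : nat) : (0 < t)%N -> gcdz t q = 1 ->
  size (Jseq s t q) = (q %% t)%N.
Proof.
move=> t0 g.
have := @count_int s t q t0 g; rewrite /qhat modz_nat.
rewrite /Jseq -sum1_size big_filter.
have -> : \sum_(0 <= k < t | inH s t q k) (1:int)
  = (\sum_(i <- iota 0 t | inH s t q i) 1%N)%:R by rewrite natr_sum /index_iota subn0.
by rewrite natz => -[].
Qed.

Lemma block (s t q c : nat) : (0 < t)%N -> gcdz t q = 1 ->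
  SK s t q (c * t) (c * t + t) = SJ s t q + (c * t)%:Z * qhat t q.
Proof.
move=> t0 g.
have -> : SK s t q (c * t) (c * t + t) = \sum_(0 + c * t <= k < t + c * t | inH s t q k) k%:Z
  by rewrite add0n addnC.
rewrite big_addn addnK.
under eq_bigl do rewrite inH_per.
under eq_bigr do rewrite PoszD.
rewrite big_split /= -/(SK s t q 0 t) -SJ_SK.
congr (_ + _).
rewrite -(@count_int s t q t0 g) mulr_sumr; apply: eq_bigr => *; by rewrite mulr1.
Qed.

Lemma blocks (s t q c : nat) : (0 < t)%N -> gcdz t q = 1 ->
  SK s t q 0 (c * t) = c%:Z * SJ s t q + qhat t q * t%:Z * Tn c.
Proof.
move=> t0 g; elim: c => [|c IH].
  by rewrite mul0n /SK /Tn !big_geq // mul0r mulr0 addr0.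
have -> : SK s t q 0 (c.+1 * t) = SK s t q 0 (c * t) + SK s t q (c * t) (c * t + t).
  by rewrite /SK mulSnr (@big_cat_nat _ _ _ (c * t)) // leq_addr.
rewrite IH block // /Tn big_nat_recr //= -/(Tn c).
rewrite PoszM.
move: (SJ s t q) (qhat t q) (Tn c) => A B C.
rewrite -[c.+1]addn1 PoszD; ring.
Qed.
Theorem theorem12 (s t q N : int)
  (hs0 : 0 <= s) (hsq : s < q) (ht1 : 1 <= t) (htq : t < q) (hN : 0 <= N)
  (hndvd : ~~ (t %| q)%Z) (hgcd : gcdz t q = 1) :
  let M := Mval s t q N in
  let S := Sval s t q N in
  let qh := qhat t q in
  let j0 := jj s t q 0 in
  let jl := jj s t q (absz qh).-1 in
  [/\ (M <= j0%:Z -> Sminus s t q N = S),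
      (j0%:Z < M -> M <= jl%:Z ->
         Sminus s t q N = S - SK s t q 0 (absz M)),
      (jl%:Z < M -> M <= j0%:Z + t ->
         Sminus s t q N = S - SJ s t q) &
      (jl%:Z < M -> j0%:Z + t < M ->
         let u := ((M - 1) %/ t)%Z in
         Sminus s t q N =
           S - u * SJ s t q - qh * t * (((u - 1) * u) %/ 2)%Z
             - SK s t q (absz (u * t)) (absz M))].
Proof.
have [sn es] : exists sn : nat, s = sn by exists (absz s); lia.
have [tn et] : exists tn : nat, t = tn by exists (absz t); lia.
have [qn eq] : exists qn : nat, q = qn by exists (absz q); lia.
have [n eN] : exists n : nat, N = n by exists (absz N); lia.
subst s t q N.
have t0 : (0 < tn)%N by lia.
have kk := @key sn tn qn n hs0 hsq ltac:(lia) htq.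
have M0 := @Mval_ge0 sn tn qn n hs0 hsq ltac:(lia).
move=> M S qh j0 jl.
rewrite -/M -/S in kk M0.
set m := absz M in kk *.
have eM : M = m%:Z by rewrite /m; lia.
have qhE : qh = (qn %% tn)%N by rewrite /qh /qhat modz_nat.
have qhpos : (0 < qn %% tn)%N.
  rewrite lt0n; apply: contra hndvd => /eqP h.
  by rewrite dvdzE /= /dvdn h.
set J := Jseq sn tn qn.
have sJ : size J = (qn %% tn)%N by apply: size_J.
have memJ : forall x, (x \in J) = (x < tn)%N && inH sn tn qn x.
  by move=> x; rewrite /J /Jseq mem_filter mem_iota /= add0n andbC.
have sortJ : sorted leq J.
  apply: sorted_filter; first exact: leq_trans.
  apply: (@sub_sorted _ ltn); first by move=> x y /ltnW.
  exact: iota_ltn_sorted.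
have hnth : forall i j, (i <= j)%N -> (j < size J)%N -> (nth 0 J i <= nth 0 J j)%N.
  move=> i j ij jS.
  apply: (sorted_leq_nth leq_trans leqnn) => //; rewrite inE //; lia.
have j0J : forall x, x \in J -> (j0 <= x)%N.
  move=> x xJ; rewrite /j0 /jj -/J -(nth_index 0 xJ); apply: hnth => //.
  by rewrite index_mem.
have jlJ : forall x, x \in J -> (x <= jl)%N.
  move=> x xJ; rewrite /jl /jj -/J -(nth_index 0 xJ) qhE /=; apply: hnth.
    have hi : (index x J < size J)%N by rewrite index_mem.
    by rewrite sJ in hi; rewrite -ltnS prednK.
  by rewrite sJ; case: (qn %% tn)%N qhpos.
have j0in : j0 \in J by rewrite /j0 /jj -/J mem_nth // sJ.
have j0t : (j0 < tn)%N by move: j0in; rewrite memJ => /andP[].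
split.
- move=> Mj; rewrite kk /SK big1_seq ?subr0 // => k /andP [hk]; rewrite mem_index_iota => km.
  exfalso; have : k \in J by rewrite memJ hk andbT; lia.
  move/j0J; lia.
- by move=> _ _; rewrite kk.
- move=> lM Mj; rewrite kk SJ_SK; congr (_ - _).
  case: (leqP m tn) => mt.
    rewrite /SK (@big_cat_nat _ _ _ m 0 tn) //= [X in _ = (_ + X)]big1_seq ?addr0 //.
    move=> k /andP [hk]; rewrite mem_index_iota => /andP [mk kt]; exfalso.
    have : k \in J by rewrite memJ hk andbT.
    move/jlJ; lia.
  rewrite /SK (@big_cat_nat _ _ _ tn 0 m) //= ?[X in (_ + X) = _]big1_seq ?addr0 //; last lia.
  move=> k /andP [hk]; rewrite mem_index_iota => /andP [tk km]; exfalso.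
  have e : k = ((k - tn) + 1 * tn)%N by lia.
  rewrite e inH_per in hk.
  have : (k - tn)%N \in J by rewrite memJ hk andbT; lia.
  move/j0J; lia.
- move=> lM jM u.
  have m1 : (1 <= m)%N by lia.
  have eu : u = ((m - 1) %/ tn)%N%:Z.
    by rewrite /u eM -divz_nat; congr (_ %/ _)%Z; lia.
  set un := ((m - 1) %/ tn)%N in eu.
  have ul : (un * tn <= m)%N.
    by apply: (leq_trans (leq_trunc_div _ _)); lia.
  have -> : absz (u * tn%:Z) = (un * tn)%N by rewrite eu -PoszM.
  rewrite kk /SK (@big_cat_nat _ _ _ (un * tn) 0 m) //= -/(SK _ _ _ 0 _) -/(SK _ _ _ _ _).
  rewrite blocks // Tn_div; last by rewrite eu.
  rewrite eu qhE /=.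
  move: (SJ sn tn qn) (SK sn tn qn (un * tn) m) (Tn un) => A B C.
  rewrite /qhat modz_nat; ring.
Qed.
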